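(* $*\text{-}\mathsf{WWKL}\le_{sW}\mathsf{WWKL}$ and $*\text{-}\mathsf{WWKL}<_W\mathsf{WWKL}$ (i.e., $\mathsf{WWKL}\not\le_W *\text{-}\mathsf{WWKL}$).
   Context: A represented space is a pair $(X,\delta_X)$ with $\delta_X:\subseteq\mathbb{N}^\mathbb{N}\to X$ a partial surjection. A realizer of $f:\subseteq X\rightrightarrows Y$ is a partial $F$ with $\delta_Y F(p)\in f(\delta_X(p))$ for all $p\in\mathrm{dom}(f\circ\delta_X)$. $f\le_W g$ if there are computable partial $H,K:\subseteq\mathbb{N}^\mathbb{N}\to\mathbb{N}^\mathbb{N}$ such that $p\mapsto H\langle p,GK(p)\rangle$ realizes $f$ for every realizer $G$ of $g$; $f\le_{sW}g$ if instead $HGK$ realizes $f$ for every realizer $G$ of $g$; $f<_W g$ means $f\le_W g$ and not $g\le_W f$. $\mathrm{Tr}$ is the set of binary trees $T\subseteq\{0,1\}^*$ (prefix-closed), represented by characteristic functions; $[T]\subseteq2^\mathbb N$ is its set of infinite paths and $\mu$ is the uniform measure on $2^\mathbb N$ ($\mu(w2^\mathbb N)=2^{-|w|}$). $\mathsf{WWKL}:\subseteq\mathrm{Tr}\rightrightarrows 2^\mathbb N$, $T\mapsto[T]$, has domain $\{T:\mu([T])>0\}$. $*\text{-}\mathsf{WWKL}:\subseteq\mathbb N\times\mathrm{Tr}\rightrightarrows2^\mathbb N$, $(n,T)\mapsto[T]$, has domain $\{(n,T):\mu([T])>2^{-n}\}$. *)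

(* Defs.v *)
From Stdlib Require Import Reals Arith List Cantor.
Import ListNotations.
Open Scope R_scope.

Definition baire := nat -> nat.

Definition npair (x y : nat) : nat := Cantor.to_nat (x, y).
Definition nfst (z : nat) : nat := fst (Cantor.of_nat z).
Definition nsnd (z : nat) : nat := snd (Cantor.of_nat z).

(* A complete basis of unary mu-recursive functionals with an oracle
   p : nat -> nat, using Cantor pairing for multiple arguments. *)
Inductive prf : Type :=
| PZero
| PSucc
| PId
| PFst
| PSnd
| POrc
| PPair (f g : prf)
| PComp (f g : prf)
| PRec (f g : prf)
| PMu (f : prf).

Inductive prf_eval (p : baire) : prf -> nat -> nat -> Prop :=
| ev_zero x : prf_eval p PZero x 0
| ev_succ x : prf_eval p PSucc x (S x)
| ev_id x : prf_eval p PId x x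
| ev_fst x : prf_eval p PFst x (nfst x)
| ev_snd x : prf_eval p PSnd x (nsnd x)
| ev_orc x : prf_eval p POrc x (p x)
| ev_pair f g x a b :
    prf_eval p f x a -> prf_eval p g x b -> prf_eval p (PPair f g) x (npair a b)
| ev_comp f g x y z :
    prf_eval p g x y -> prf_eval p f y z -> prf_eval p (PComp f g) x z
| ev_rec0 f g x r :
    prf_eval p f x r -> prf_eval p (PRec f g) (npair x 0) r
| ev_recS f g x m r' r :
    prf_eval p (PRec f g) (npair x m) r' ->
    prf_eval p g (npair x (npair m r')) r ->
    prf_eval p (PRec f g) (npair x (S m)) r
| ev_mu f x n :
    prf_eval p f (npair x n) 0 ->
    (forall m, (m < n)%nat -> exists k, k <> 0%nat /\ prf_eval p f (npair x m) k) ->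
    prf_eval p (PMu f) x n.

Definition pfun := baire -> baire -> Prop.
Definition functional (F : pfun) : Prop :=
  forall p q1 q2, F p q1 -> F p q2 -> q1 = q2.

Definition computable (F : pfun) : Prop :=
  functional F /\
  exists M : prf, forall p q, F p q -> forall n, prf_eval p M n (q n).

Definition bpair (p q : baire) : baire :=
  fun i => if Nat.even i then p (Nat.div2 i) else q (Nat.div2 i).

Record RepSpace := {
  carrier :> Type;
  delta : baire -> carrier -> Prop   (* graph of the partial surjection delta *)
}.

(* a partial multi-valued function f :subseteq X => Y, as a relation;
   dom f = { x | exists y, f x y } *)
Definition problem (X Y : RepSpace) := X -> Y -> Prop.

Definition dom_comp {X Y : RepSpace} (f : problem X Y) (p : baire) : Prop :=
  exists x, delta X p x /\ exists y, f x y.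

Definition realizes {X Y : RepSpace} (F : pfun) (f : problem X Y) : Prop :=
  forall p x, delta X p x -> (exists y, f x y) ->
    exists q, F p q /\ exists y, delta Y q y /\ f x y.

Definition realizer {X Y : RepSpace} (G : pfun) (f : problem X Y) : Prop :=
  functional G /\ realizes G f.

Definition W_le {X Y Z W : RepSpace} (f : problem X Y) (g : problem Z W) : Prop :=
  exists H K : pfun, computable H /\ computable K /\
    forall G : pfun, realizer G g ->
      realizes (fun p r => exists q s, K p q /\ G q s /\ H (bpair p s) r) f.

Definition sW_le {X Y Z W : RepSpace} (f : problem X Y) (g : problem Z W) : Prop :=
  exists H K : pfun, computable H /\ computable K /\
    forall G : pfun, realizer G g ->
      realizes (fun p r => exists q s, K p q /\ G q s /\ H s r) f.

Definition W_lt {X Y Z W : RepSpace} (f : problem X Y) (g : problem Z W) : Prop :=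
  W_le f g /\ ~ W_le g f.

Definition word := list bool.

(* bijective coding of binary words by natural numbers *)
Fixpoint wcode (w : word) : nat :=
  match w with
  | [] => 0%nat
  | b :: w' => S (2 * wcode w' + (if b then 1 else 0))
  end.

Definition is_tree (T : word -> bool) : Prop :=
  forall u v, T (u ++ v) = true -> T u = true.

Definition tree := { T : word -> bool | is_tree T }.

(* characteristic-function representation of trees *)
Definition delta_Tr (p : baire) (T : tree) : Prop :=
  forall w, p (wcode w) = (if proj1_sig T w then 1 else 0)%nat.

Definition Tr : RepSpace := {| carrier := tree; delta := delta_Tr |}.

Definition delta_Cantor (p : baire) (x : nat -> bool) : Prop :=
  forall n, p n = (if x n then 1 else 0)%nat.

Definition Cantor2 : RepSpace := {| carrier := nat -> bool; delta := delta_Cantor |}.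

(* N x Tr with the standard product representation delta<q,r> = (q(0), delta_Tr r) *)
Definition delta_NTr (p : baire) (nT : nat * tree) : Prop :=
  p (Nat.double 0) = fst nT /\ delta_Tr (fun i => p (S (Nat.double i))) (snd nT).

Definition NTr : RepSpace := {| carrier := nat * tree; delta := delta_NTr |}.

Definition prefix (x : nat -> bool) (n : nat) : word := map x (seq 0 n).

Definition in_paths (T : tree) (x : nat -> bool) : Prop :=
  forall n, proj1_sig T (prefix x n) = true.

Fixpoint words (k : nat) : list word :=
  match k with
  | O => [ [] ]
  | S k' => flat_map (fun w => [w ++ [false]; w ++ [true]]) (words k')
  end.

Definition level_count (T : tree) (k : nat) : nat :=
  length (filter (proj1_sig T) (words k)).

(* mu([T]) > r.  Since [T] = inter_k U_{w in T, |w|=k} w2^N (decreasing),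
   mu([T]) = inf_k level_count T k / 2^k; so mu([T]) > r iff that infimum
   exceeds r. *)
Definition measure_paths_gt (T : tree) (r : R) : Prop :=
  exists eps : R, 0 < eps /\
    forall k, INR (level_count T k) / 2 ^ k >= r + eps.

Definition WWKL : problem Tr Cantor2 :=
  fun T x => measure_paths_gt T 0 /\ in_paths T x.

Definition starWWKL : problem NTr Cantor2 :=
  fun nT x => measure_paths_gt (snd nT) (/ 2 ^ fst nT) /\ in_paths (snd nT) x.

(* Main.v *)
Require Import Defs.
From Stdlib Require Import Reals Arith List Cantor Lia Lra FunctionalExtensionality Classical ClassicalEpsilon.
Import ListNotations.

Lemma nfst_pair a b : nfst (npair a b) = a.
Proof. unfold nfst, npair. rewrite Cantor.cancel_of_to. reflexivity. Qed.
Lemma nsnd_pair a b : nsnd (npair a b) = b.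
Proof. unfold nsnd, npair. rewrite Cantor.cancel_of_to. reflexivity. Qed.
Lemma npair_inj a b c d : npair a b = npair c d -> a = c /\ b = d.
Proof.
  intro H. pose proof (f_equal nfst H). pose proof (f_equal nsnd H).
  rewrite !nfst_pair in H0. rewrite !nsnd_pair in H1. auto.
Qed.

Definition agree (p p' : baire) (B : nat) := forall i, (i < B)%nat -> p' i = p i.

Lemma agree_mono p p' B B' : (B <= B')%nat -> agree p p' B' -> agree p p' B.
Proof. unfold agree; intros; apply H0; lia. Qed.

Lemma fin_bound (P : nat -> nat -> Prop) n :
  (forall i B B', (B <= B')%nat -> P i B -> P i B') ->
  (forall i, (i < n)%nat -> exists B, P i B) ->
  exists B, forall i, (i < n)%nat -> P i B.
Proof.
  intros Hm. induction n; intros H.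
  - exists 0%nat. intros; lia.
  - destruct IHn as [B1 HB1]. { intros; apply H; lia. }
    destruct (H n) as [B2 HB2]; [lia|].
    exists (max B1 B2). intros i Hi.
    destruct (Nat.eq_dec i n) as [->|].
    + eapply Hm; [|eauto]; lia.
    + eapply Hm; [|apply HB1; lia]; lia.
Qed.

Fixpoint use_prf p M x y (E : prf_eval p M x y) {struct E} :
  exists B, forall p', agree p p' B -> prf_eval p' M x y.
Proof.
  destruct E.
  - exists 0%nat; intros; constructor.
  - exists 0%nat; intros; constructor.
  - exists 0%nat; intros; constructor.
  - exists 0%nat; intros; constructor.
  - exists 0%nat; intros; constructor.
  - exists (S x). intros p' Hp. rewrite <- (Hp x) by lia. constructor.
  - destruct (use_prf _ _ _ _ E1) as [B1 H1]. destruct (use_prf _ _ _ _ E2) as [B2 H2].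
    exists (max B1 B2). intros p' Hp. constructor.
    + apply H1. eapply agree_mono; [|eauto]; lia.
    + apply H2. eapply agree_mono; [|eauto]; lia.
  - destruct (use_prf _ _ _ _ E1) as [B1 H1]. destruct (use_prf _ _ _ _ E2) as [B2 H2].
    exists (max B1 B2). intros p' Hp. econstructor.
    + apply H1. eapply agree_mono; [|eauto]; lia.
    + apply H2. eapply agree_mono; [|eauto]; lia.
  - destruct (use_prf _ _ _ _ E) as [B1 H1].
    exists B1. intros p' Hp. constructor. auto.
  - destruct (use_prf _ _ _ _ E1) as [B1 H1]. destruct (use_prf _ _ _ _ E2) as [B2 H2].
    exists (max B1 B2). intros p' Hp. econstructor.
    + apply H1. eapply agree_mono; [|eauto]; lia.
    + apply H2. eapply agree_mono; [|eauto]; lia.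
  - destruct (use_prf _ _ _ _ E) as [B1 H1].
    destruct (fin_bound (fun m B => forall p', agree p p' B ->
                 exists k, k <> 0%nat /\ prf_eval p' f (npair x m) k) n) as [B2 H2].
    + intros i B B' Hle HP p' Hp. apply HP. eapply agree_mono; eauto.
    + intros m Hm. destruct (H m Hm) as [k [Hk Ek]].
      destruct (use_prf _ _ _ _ Ek) as [B3 H3].
      exists B3. intros p' Hp. exists k. auto.
    + exists (max B1 B2). intros p' Hp. constructor.
      * apply H1. eapply agree_mono; [|eauto]; lia.
      * intros m Hm. apply (H2 m Hm). eapply agree_mono; [|eauto]; lia.
Qed.

Ltac npinj := repeat match goal with
  | Hq : npair _ _ = npair _ _ |- _ => apply npair_inj in Hq; destruct Hq as [? ?]
  | Hq : S _ = S _ |- _ => injection Hq as Hq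
  end; subst; try discriminate.

Fixpoint det_prf p M x y1 (E : prf_eval p M x y1) {struct E} :
  forall y2, prf_eval p M x y2 -> y1 = y2.
Proof.
  destruct E; intros y2 F.
  - inversion F; auto.
  - inversion F; auto.
  - inversion F; auto.
  - inversion F; auto.
  - inversion F; auto.
  - inversion F; auto.
  - inversion F; subst.
    f_equal; [eapply det_prf; eauto | eapply det_prf; eauto].
  - inversion F; subst.
    pose proof (det_prf _ _ _ _ E1 _ H1); subst.
    eapply det_prf; eauto.
  - remember (npair x 0) as z eqn:Hz. remember (PRec f g) as M eqn:HM.
    destruct F; try discriminate; injection HM as <- <-.
    + apply npair_inj in Hz. destruct Hz as [<- _]. eapply det_prf; eauto.
    + apply npair_inj in Hz. destruct Hz; discriminate.
  - remember (npair x (S m)) as z eqn:Hz. remember (PRec f g) as M eqn:HM.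
    destruct F; try discriminate; injection HM as <- <-.
    + apply npair_inj in Hz. destruct Hz; discriminate.
    + apply npair_inj in Hz. destruct Hz as [<- Hm]. injection Hm as <-.
      pose proof (det_prf _ _ _ _ E1 _ F1); subst.
      eapply det_prf; eauto.
  - inversion F; subst.
    destruct (lt_eq_lt_dec n y2) as [[Hlt|Heq]|Hgt]; auto.
    + destruct (H2 n Hlt) as [k [Hk Ek]].
      pose proof (det_prf _ _ _ _ E _ Ek). congruence.
    + destruct (H y2 Hgt) as [k [Hk Ek]].
      pose proof (det_prf _ _ _ _ Ek _ H1). congruence.
Qed.

Definition Mg := PComp PSucc (PComp PSnd PSnd).
Definition Modd := PComp POrc (PComp PSucc (PComp (PRec PId Mg) (PPair PId PId))).

Lemma ev_snd' p z y : nsnd z = y -> prf_eval p PSnd z y.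
Proof. intros <-; constructor. Qed.

Lemma rec_add p x m : prf_eval p (PRec PId Mg) (npair x m) (x + m).
Proof.
  induction m.
  - rewrite Nat.add_0_r. constructor. constructor.
  - eapply ev_recS; [exact IHm|]. unfold Mg.
    replace (x + S m)%nat with (S (x + m)) by lia.
    econstructor; [|constructor].
    econstructor; apply ev_snd'; rewrite nsnd_pair; reflexivity.
Qed.

Lemma Modd_ev p i : prf_eval p Modd i (p (S (Nat.double i))).
Proof.
  unfold Modd. econstructor; [|constructor].
  econstructor; [|constructor].
  apply ev_comp with (y := npair i i); [constructor; constructor|].
  apply rec_add.
Qed.

Lemma Modd_comp : computable (fun p q => q = fun i => p (S (Nat.double i))).
Proof.
  split.
  - intros p q1 q2 -> ->. reflexivity.
  - exists Modd. intros p q -> n. apply Modd_ev.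
Qed.

Lemma id_comp : computable (fun p q => q = p).
Proof.
  split.
  - intros p q1 q2 -> ->. reflexivity.
  - exists POrc. intros p q -> n. constructor.
Qed.

Lemma bpair_odd p s i : bpair p s (S (Nat.double i)) = s i.
Proof.
  unfold bpair. unfold Nat.double.
  replace (S (i + i)) with (S (2 * i)) by lia.
  rewrite Nat.div2_succ_double.
  replace (Nat.even (S (2 * i))) with false; [reflexivity|].
  rewrite Nat.even_succ, Nat.odd_mul. reflexivity.
Qed.

Lemma meas_weaken T r r' : r' <= r -> measure_paths_gt T r -> measure_paths_gt T r'.
Proof.
  intros Hr [eps [He H]]. exists eps. split; auto. intro k. specialize (H k). lra.
Qed.

Lemma inv_pow_pos n : 0 < / 2 ^ n.
Proof. apply Rinv_0_lt_compat. apply pow_lt. lra. Qed.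

Lemma sW_part : sW_le starWWKL WWKL.
Proof.
  exists (fun s r => r = s), (fun p q => q = fun i => p (S (Nat.double i))).
  split; [apply id_comp|]. split; [apply Modd_comp|].
  intros G [HGf HG] p [n T] [H0 H1] [y [Hm Hy]].
  destruct (HG (fun i => p (S (Nat.double i))) T H1) as [s [Gs [z [Hz [_ Hzp]]]]].
  { exists y. split; auto. eapply meas_weaken; [|exact Hm]. left. apply inv_pow_pos. }
  exists s. split.
  - exists (fun i => p (S (Nat.double i))), s. auto.
  - exists z. split; auto. split; auto.
Qed.

Lemma W_part : W_le starWWKL WWKL.
Proof.
  exists (fun s r => r = fun i => s (S (Nat.double i))), (fun p q => q = fun i => p (S (Nat.double i))).
  split; [apply Modd_comp|]. split; [apply Modd_comp|].
  intros G [HGf HG] p [n T] [H0 H1] [y [Hm Hy]].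
  destruct (HG (fun i => p (S (Nat.double i))) T H1) as [s [Gs [z [Hz [_ Hzp]]]]].
  { exists y. split; auto. eapply meas_weaken; [|exact Hm]. left. apply inv_pow_pos. }
  exists s. split.
  - exists (fun i => p (S (Nat.double i))), s. split; auto. split; auto.
    apply functional_extensionality. intro i. rewrite bpair_odd. reflexivity.
  - exists z. split; auto. split; auto.
Qed.

Lemma words_length k w : In w (words k) -> length w = k.
Proof.
  revert w; induction k; simpl; intros w H.
  - destruct H as [<-|[]]; reflexivity.
  - apply in_flat_map in H. destruct H as [w' [Hw' Hin]].
    simpl in Hin. destruct Hin as [<-|[<-|[]]]; rewrite length_app; simpl;
    rewrite (IHk _ Hw'); lia.
Qed.

Lemma words_In k w : length w = k -> In w (words k).
Proof.
  revert w; induction k; intros w H.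
  - destruct w; [left; reflexivity|discriminate].
  - destruct (exists_last (l:=w)) as [w' [b ->]]. { intros ->; discriminate. }
    rewrite length_app in H; simpl in H.
    simpl. apply in_flat_map. exists w'. split; [apply IHk; lia|].
    destruct b; simpl; auto.
Qed.

Lemma words_len k : length (words k) = (2 ^ k)%nat.
Proof.
  induction k; simpl; auto.
  assert (forall l : list word, length (flat_map (fun w => [w ++ [false]; w ++ [true]]) l) = 2 * length l)%nat.
  { induction l; simpl; auto. rewrite IHl. lia. }
  rewrite H, IHk. lia.
Qed.

Lemma count_ext {A} (P Q : A -> bool) l : (forall a, In a l -> P a = Q a) ->
  filter P l = filter Q l.
Proof. apply filter_ext_in. Qed.

Lemma count_lemma (P : word -> bool) m d :
  length (filter (fun w => P (firstn m w)) (words (m + d))) =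
  (length (filter P (words m)) * 2 ^ d)%nat.
Proof.
  induction d.
  - rewrite Nat.add_0_r, Nat.mul_1_r. f_equal. apply filter_ext_in.
    intros w Hw. apply words_length in Hw. rewrite firstn_all2 by lia. reflexivity.
  - replace (m + S d)%nat with (S (m + d)) by lia. simpl (words (S _)).
    assert (forall l : list word, (forall w, In w l -> m <= length w)%nat ->
      length (filter (fun w => P (firstn m w)) (flat_map (fun w => [w ++ [false]; w ++ [true]]) l))
      = (2 * length (filter (fun w => P (firstn m w)) l))%nat).
    { induction l; intros Hl; [reflexivity|].
      assert (Hf : forall b, firstn m (a ++ [b]) = firstn m a).
      { intro b. rewrite firstn_app. replace (m - length a)%nat with 0%nat by (specialize (Hl a (or_introl eq_refl)); lia).
        simpl. apply app_nil_r. }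
      change (flat_map ?g (a :: l)) with (g a ++ flat_map g l). rewrite filter_app, length_app.
      rewrite IHl by (intros; apply Hl; right; auto).
      simpl. rewrite !Hf. destruct (P (firstn m a)); simpl; lia. }
    rewrite H, IHd. simpl. lia.
    intros w Hw. apply words_length in Hw. lia.
Qed.

Lemma filter_split {A} (P Q R : A -> bool) l :
  (forall a, P a = true -> Q a = true -> False) ->
  (forall a, P a = true -> R a = true) -> (forall a, Q a = true -> R a = true) ->
  (length (filter P l) + length (filter Q l) <= length (filter R l))%nat.
Proof.
  intros H1 H2 H3. induction l; simpl; auto.
  destruct (P a) eqn:Ea; destruct (Q a) eqn:Eb.
  - exfalso; eauto.
  - rewrite (H2 a Ea). simpl. lia.
  - rewrite (H3 a Eb). simpl. lia.
  - destruct (R a); simpl; lia.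
Qed.

Lemma filter_mono {A} (P Q : A -> bool) l :
  (forall a, P a = true -> Q a = true) -> (length (filter P l) <= length (filter Q l))%nat.
Proof.
  intros H. induction l; simpl; auto.
  destruct (P a) eqn:Ea. rewrite (H a Ea). simpl; lia.
  destruct (Q a); simpl; lia.
Qed.

Lemma filter_le {A} (P : A -> bool) l : (length (filter P l) <= length l)%nat.
Proof. induction l; simpl; auto. destruct (P a); simpl; lia. Qed.

Lemma prefix_length x n : length (prefix x n) = n.
Proof. unfold prefix. rewrite length_map, length_seq. reflexivity. Qed.

Lemma prefix_nth x n i d : (i < n)%nat -> nth i (prefix x n) d = x i.
Proof.
  intros H. unfold prefix.
  rewrite nth_indep with (d' := x 0%nat) by (rewrite length_map, length_seq; auto).
  rewrite map_nth, seq_nth by auto. reflexivity.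
Qed.

Lemma prefix_S x n : prefix x (S n) = prefix x n ++ [x n].
Proof. unfold prefix. rewrite seq_S, map_app. reflexivity. Qed.

Lemma firstn_prefix x m n : (m <= n)%nat -> firstn m (prefix x n) = prefix x m.
Proof.
  intros H. apply nth_ext with (d := false) (d' := false).
  - rewrite length_firstn, !prefix_length. lia.
  - intros i Hi. rewrite length_firstn, prefix_length in Hi.
    rewrite nth_firstn. destruct (i <? m)%nat eqn:E; [|apply Nat.ltb_ge in E; lia].
    rewrite !prefix_nth by lia. reflexivity.
Qed.

Definition pclosed (P : word -> Prop) := forall u v, P (u ++ v) -> P u.

Lemma koenig (P : word -> Prop) : pclosed P ->
  (forall k, exists w, length w = k /\ P w) ->
  exists x : nat -> bool, forall n, P (prefix x n).
Proof.
  intros Hc Hall.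
  set (Inf := fun w => forall k, exists w', length w' = k /\ P (w ++ w')).
  assert (Hstep : forall w, Inf w -> Inf (w ++ [false]) \/ Inf (w ++ [true])).
  { intros w Hw. apply NNPP. intro Hn. apply not_or_and in Hn. destruct Hn as [H0 H1].
    apply not_all_ex_not in H0. destruct H0 as [k0 H0].
    apply not_all_ex_not in H1. destruct H1 as [k1 H1].
    destruct (Hw (S (max k0 k1))) as [w' [Hl Hp]].
    destruct w' as [|b w'']; [discriminate|]. simpl in Hl.
    destruct b.
    - apply H1. exists (firstn k1 w''). split. rewrite length_firstn; lia.
      apply (Hc _ (skipn k1 w'')). rewrite <- !app_assoc. simpl. rewrite firstn_skipn. exact Hp.
    - apply H0. exists (firstn k0 w''). split. rewrite length_firstn; lia.
      apply (Hc _ (skipn k0 w'')). rewrite <- !app_assoc. simpl. rewrite firstn_skipn. exact Hp. }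
  set (ch := fun w => if excluded_middle_informative (Inf (w ++ [false])) then false else true).
  assert (Hch : forall w, Inf w -> Inf (w ++ [ch w])).
  { intros w Hw. unfold ch. destruct excluded_middle_informative; auto.
    destruct (Hstep w Hw); tauto. }
  set (pre := fix pre n := match n with O => [] | S n' => pre n' ++ [ch (pre n')] end).
  assert (Hpre : forall n, Inf (pre n)).
  { induction n; simpl.
    - intro k. destruct (Hall k) as [w [Hl Hp]]. exists w. auto.
    - apply Hch; auto. }
  assert (Hplen : forall n, length (pre n) = n).
  { induction n; simpl; auto. rewrite length_app, IHn. simpl; lia. }
  exists (fun n => nth n (pre (S n)) false).
  assert (Heq : forall n, prefix (fun n => nth n (pre (S n)) false) n = pre n).
  { induction n; auto. rewrite prefix_S, IHn. simpl (pre (S n)) at 2.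
    f_equal. f_equal. simpl. rewrite app_nth2 by (rewrite Hplen; lia).
    rewrite Hplen, Nat.sub_diag. reflexivity. }
  intro n. rewrite Heq. destruct (Hpre n 0%nat) as [w' [Hl Hp]].
  destruct w'; [|discriminate]. rewrite app_nil_r in Hp. exact Hp.
Qed.

Definition b2n (b : bool) : nat := if b then 1%nat else 0%nat.
Definition name (x : nat -> bool) : baire := fun n => b2n (x n).

Lemma b2n_inj a b : b2n a = b2n b -> a = b.
Proof. destruct a, b; simpl; congruence. Qed.

Lemma delta_name x : delta_Cantor (name x) x.
Proof. intro n. reflexivity. Qed.

Definition weq (a b : word) : bool := if list_eq_dec Bool.bool_dec a b then true else false.
Lemma weq_spec a b : weq a b = true <-> a = b.
Proof. unfold weq. destruct list_eq_dec; split; congruence. Qed.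

Lemma full_is_tree : is_tree (fun _ => true).
Proof. intros u v _. reflexivity. Qed.
Definition Tfull : tree := exist _ (fun _ => true) full_is_tree.
Definition p0 : baire := fun _ => 1%nat.

Lemma delta_full : delta_Tr p0 Tfull.
Proof. intro w. reflexivity. Qed.

Fixpoint wdecf (f c : nat) : word :=
  match f with
  | O => []
  | S f' => match c with O => [] | S c' => Nat.odd c' :: wdecf f' (Nat.div2 c') end
  end.
Definition wdec c := wdecf c c.

Lemma wdecf_len f c : (length (wdecf f c) <= f)%nat.
Proof. revert c; induction f; intros c; simpl; [lia|]. destruct c; simpl; [lia|]. specialize (IHf (Nat.div2 c)). lia. Qed.

Lemma wdecf_code w f : (wcode w <= f)%nat -> wdecf f (wcode w) = w.
Proof.
  revert f; induction w as [|b w IH]; intros f Hf; simpl.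
  - destruct f; reflexivity.
  - simpl in Hf. destruct f; [lia|]. simpl.
    assert (Hd : Nat.div2 (2 * wcode w + (if b then 1 else 0)) = wcode w).
    { destruct b. rewrite Nat.add_1_r. apply Nat.div2_succ_double. rewrite Nat.add_0_r. apply Nat.div2_double. }
    assert (Ho : Nat.odd (2 * wcode w + (if b then 1 else 0)) = b).
    { destruct b. rewrite Nat.add_1_r, Nat.odd_succ, Nat.even_mul. reflexivity.
      rewrite Nat.add_0_r, Nat.odd_mul. reflexivity. }
    change (wcode w + (wcode w + 0))%nat with (2 * wcode w)%nat.
    rewrite Hd, Ho. f_equal. apply IH. lia.
Qed.

Lemma wdec_code w : wdec (wcode w) = w.
Proof. apply wdecf_code. lia. Qed.

Lemma wdec_len c : (length (wdec c) <= c)%nat.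
Proof. apply wdecf_len. Qed.

Lemma wcode_bound w : (wcode w + 2 <= 2 ^ (length w + 1))%nat.
Proof.
  induction w as [|b w IH]; simpl; [lia|].
  rewrite Nat.add_0_r in *. destruct b; lia.
Qed.

Definition T1fun (lam n0 : nat) (v : word) (w : word) : bool :=
  (length w <? lam)%nat || weq (firstn n0 w) v.

Lemma T1_is_tree lam n0 v : (n0 < lam)%nat -> is_tree (T1fun lam n0 v).
Proof.
  intros Hl u w H. unfold T1fun in *. apply Bool.orb_true_iff in H.
  apply Bool.orb_true_iff. destruct H as [H|H].
  - left. apply Nat.ltb_lt in H. apply Nat.ltb_lt. rewrite length_app in H. lia.
  - destruct (Nat.lt_ge_cases (length u) lam) as [Hu|Hu].
    + left. apply Nat.ltb_lt; auto.
    + right. rewrite firstn_app in H. replace (n0 - length u)%nat with 0%nat in H by lia.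
      simpl in H. rewrite app_nil_r in H. exact H.
Qed.

Definition T1tree lam n0 v (H : (n0 < lam)%nat) : tree := exist _ (T1fun lam n0 v) (T1_is_tree lam n0 v H).
Definition p1name lam n0 v : baire := fun c => b2n (T1fun lam n0 v (wdec c)).

Lemma delta_T1 lam n0 v H : delta_Tr (p1name lam n0 v) (T1tree lam n0 v H).
Proof. intro w. unfold p1name. rewrite wdec_code. reflexivity. Qed.

Lemma agree_T1 lam n0 v : agree p0 (p1name lam n0 v) lam.
Proof.
  intros c Hc. unfold p1name, T1fun. pose proof (wdec_len c).
  replace (length (wdec c) <? lam)%nat with true. reflexivity.
  symmetry. apply Nat.ltb_lt. lia.
Qed.

Lemma delta_Tr_unique r T1 T2 : delta_Tr r T1 -> delta_Tr r T2 -> forall w, proj1_sig T1 w = proj1_sig T2 w.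
Proof.
  intros H1 H2 w. specialize (H1 w). specialize (H2 w). rewrite H1 in H2.
  destruct (proj1_sig T1 w), (proj1_sig T2 w); simpl in *; congruence.
Qed.

Lemma in_paths_ext T1 T2 x : (forall w, proj1_sig T1 w = proj1_sig T2 w) -> in_paths T1 x -> in_paths T2 x.
Proof. intros H Hp n. rewrite <- H. apply Hp. Qed.

Definition Fpick (q : baire) : baire :=
  match excluded_middle_informative (exists x, forall nT, delta_NTr q nT -> in_paths (snd nT) x) with
  | left Hx => name (proj1_sig (constructive_indefinite_description _ Hx))
  | right _ => fun _ => 0%nat
  end.

Definition Gov (qs : baire) (xs : nat -> bool) : pfun := fun q s =>
  dom_comp starWWKL q /\
  s = (if excluded_middle_informative (q = qs) then name xs else Fpick q).

Lemma Gov_real qs xs :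
  (forall nT, delta_NTr qs nT -> (exists y, starWWKL nT y) -> in_paths (snd nT) xs) ->
  realizer (Gov qs xs) starWWKL.
Proof.
  intros Hq. split.
  - intros q s1 s2 [_ ->] [_ ->]. reflexivity.
  - intros p nT Hd Hdom.
    exists (if excluded_middle_informative (p = qs) then name xs else Fpick p).
    split. { split; [exists nT; split; auto|reflexivity]. }
    destruct Hdom as [y0 [Hm Hy0]].
    destruct excluded_middle_informative as [->|Hne].
    + exists xs. split; [apply delta_name|]. split; auto. apply Hq; eauto. exists y0; split; auto.
    + unfold Fpick. destruct excluded_middle_informative as [Hx|Hnx].
      * destruct constructive_indefinite_description as [x Hx']. simpl.
        exists x. split; [apply delta_name|]. split; auto.
      * exfalso. apply Hnx. exists y0. intros nT' Hd'.
        eapply in_paths_ext; [|exact Hy0].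
        eapply delta_Tr_unique; [apply Hd|apply Hd'].
Qed.

Lemma Gbase_real : realizer (Gov p0 (fun _ => false)) starWWKL.
Proof.
  apply Gov_real. intros [n T] [_ HT] _ k. simpl.
  specialize (HT (prefix (fun _ => false) k)). unfold p0 in HT; simpl in HT.
  destruct (proj1_sig T _); simpl in HT; congruence.
Qed.

Lemma pow2_INR k : INR (2 ^ k) = 2 ^ k.
Proof. rewrite pow_INR. reflexivity. Qed.

Lemma ratio_ge c n k : (2 ^ k <= c * 2 ^ n)%nat -> INR c / 2 ^ k >= / 2 ^ n.
Proof.
  intros H. apply le_INR in H. rewrite mult_INR, !pow2_INR in H.
  assert (0 < 2 ^ k) by (apply pow_lt; lra). assert (0 < 2 ^ n) by (apply pow_lt; lra).
  apply Rle_ge. apply Rmult_le_reg_r with (2 ^ k * 2 ^ n). nra.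
  replace (/ 2 ^ n * (2 ^ k * 2 ^ n)) with (2 ^ k) by (field; lra).
  replace (INR c / 2 ^ k * (2 ^ k * 2 ^ n)) with (INR c * 2 ^ n) by (field; lra).
  lra.
Qed.

Lemma ratio_gt c n k eps : 0 < eps -> INR c / 2 ^ k >= / 2 ^ n + eps -> (2 ^ k < c * 2 ^ n)%nat.
Proof.
  intros He H. apply INR_lt. rewrite mult_INR, !pow2_INR.
  assert (0 < 2 ^ k) by (apply pow_lt; lra). assert (0 < 2 ^ n) by (apply pow_lt; lra).
  assert (INR c / 2 ^ k > / 2 ^ n) by lra.
  apply Rmult_lt_reg_r with (/ 2 ^ k * / 2 ^ n). apply Rmult_lt_0_compat; apply Rinv_0_lt_compat; lra.
  replace (2 ^ k * (/ 2 ^ k * / 2 ^ n)) with (/ 2 ^ n) by (field; lra).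
  replace (INR c * 2 ^ n * (/ 2 ^ k * / 2 ^ n)) with (INR c / 2 ^ k) by (field; lra).
  lra.
Qed.

Definition listmax (l : list nat) := fold_right max 0%nat l.
Lemma listmax_In a l : In a l -> (a <= listmax l)%nat.
Proof. induction l; simpl; [tauto|]. intros [->|H]; [lia|]. specialize (IHl H); lia. Qed.

Lemma filter_mono_in {A} (P Q : A -> bool) l :
  (forall a, In a l -> P a = true -> Q a = true) -> (length (filter P l) <= length (filter Q l))%nat.
Proof.
  intros H. induction l; simpl; auto.
  destruct (P a) eqn:Ea. rewrite (H a (or_introl eq_refl) Ea). simpl. specialize (IHl (fun b Hb => H b (or_intror Hb))). lia.
  specialize (IHl (fun b Hb => H b (or_intror Hb))). destruct (Q a); simpl; lia.
Qed.

Lemma filter_In_pos {A} (P : A -> bool) l a : In a l -> P a = true -> (1 <= length (filter P l))%nat.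
Proof.
  intros Hin Hp. destruct (filter P l) eqn:E.
  - assert (In a (filter P l)) by (apply filter_In; auto). rewrite E in H. destruct H.
  - simpl; lia.
Qed.

Lemma full_dom : exists y, WWKL Tfull y.
Proof.
  exists (fun _ => false). split.
  - exists 1. split; [lra|]. intro k. unfold level_count. simpl.
    replace (filter (fun _ : word => true) (words k)) with (words k) by (symmetry; apply filter_true).
    rewrite words_len, pow2_INR.
    assert (0 < 2 ^ k) by (apply pow_lt; lra).
    unfold Rdiv. rewrite Rinv_r by lra. lra.
  - intro n. reflexivity.
Qed.

Lemma T1_dom lam n0 v H : length v = n0 -> exists y, WWKL (T1tree lam n0 v H) y.
Proof.
  intros Hv. exists (fun i => nth i v false). split.
  - exists (/ 2 ^ n0). split; [apply Rinv_0_lt_compat, pow_lt; lra|]. intro k.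
    rewrite Rplus_0_l. apply ratio_ge. unfold level_count. simpl.
    destruct (Nat.lt_ge_cases k lam) as [Hk|Hk].
    + rewrite (filter_ext_in _ (fun _ => true)).
      * rewrite filter_true, words_len. pose proof (Nat.pow_nonzero 2 n0 ltac:(lia)). nia.
      * intros w Hw. apply words_length in Hw. unfold T1fun.
        apply Bool.orb_true_iff. left. apply Nat.ltb_lt. lia.
    + assert (H1 : (length (filter (fun w => weq (firstn n0 w) v) (words (n0 + (k - n0)))) <=
              length (filter (T1fun lam n0 v) (words (n0 + (k - n0)))))%nat).
      { apply filter_mono. intros w Hw. unfold T1fun. rewrite Hw. apply Bool.orb_true_r. }
      pose proof (count_lemma (fun t => weq t v) n0 (k - n0)) as Hc. cbv beta in Hc. rewrite Hc in H1.
      assert (H2 : (1 <= length (filter (fun w => weq w v) (words n0)))%nat).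
      { apply filter_In_pos with v. apply words_In; auto. apply weq_spec; auto. }
      replace (n0 + (k - n0))%nat with k in H1 by lia.
      replace (2 ^ k)%nat with (2 ^ (k - n0) * 2 ^ n0)%nat by (rewrite <- Nat.pow_add_r; f_equal; lia).
      nia.
  - intro n. simpl. unfold T1fun. apply Bool.orb_true_iff.
    destruct (Nat.lt_ge_cases n lam) as [Hn|Hn].
    + left. apply Nat.ltb_lt. rewrite prefix_length. auto.
    + right. apply weq_spec. rewrite firstn_prefix by lia.
      apply nth_ext with (d := false) (d' := false).
      * rewrite prefix_length; auto.
      * intros i Hi. rewrite prefix_length in Hi. rewrite prefix_nth by auto. reflexivity.
Qed.

Definition matches (s : baire) (t : word) := forall i, (i < length t)%nat -> s i = b2n (nth i t false).

Lemma div2_le i : (Nat.div2 i <= i)%nat.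
Proof. pose proof (Nat.div2_odd i). lia. Qed.

Lemma agree_bpair p p' s s' B : agree p p' B -> agree s s' B -> agree (bpair p s) (bpair p' s') B.
Proof.
  intros H1 H2 i Hi. unfold bpair. pose proof (div2_le i).
  destruct (Nat.even i); [apply H1|apply H2]; lia.
Qed.

Lemma apply_red (H K : pfun) (Hred : forall G, realizer G starWWKL ->
      realizes (fun p r => exists q s, K p q /\ G q s /\ H (bpair p s) r) WWKL)
  p T qs xs : delta_Tr p T -> (exists y, WWKL T y) ->
  (forall nT, delta_NTr qs nT -> (exists y, starWWKL nT y) -> in_paths (snd nT) xs) ->
  exists q s r, K p q /\ Gov qs xs q s /\ H (bpair p s) r /\ exists y, delta_Cantor r y /\ WWKL T y.
Proof.
  intros Hd Hdom Hq. destruct (Hred _ (Gov_real qs xs Hq) p T Hd Hdom) as [r [[q [s [H1 [H2 H3]]]] [y [Hy1 Hy2]]]].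
  exists q, s, r. split; [auto|split; [auto|split; [auto|exists y; auto]]].
Qed.

Open Scope bool_scope.

Lemma base_hyp : forall nT, delta_NTr p0 nT -> (exists y, starWWKL nT y) -> in_paths (snd nT) (fun _ => false).
Proof.
  intros [n T] [_ HT] _ k. simpl.
  specialize (HT (prefix (fun _ => false) k)). unfold p0 in HT; simpl in HT.
  destruct (proj1_sig T _); simpl in HT; congruence.
Qed.

Lemma neg_part : ~ W_le WWKL starWWKL.
Proof.
  intros [H [K [[HHf [MH HMH]] [[HKf [MK HMK]] Hred]]]].
  destruct (apply_red H K Hred p0 Tfull p0 (fun _ => false) delta_full full_dom base_hyp)
    as [q0 [s0 [r0 [HK0 [[Hdom0 _] _]]]]].
  destruct Hdom0 as [[n0' T0] [[Hn0 HT0] _]]. simpl in Hn0, HT0.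
  set (n0 := q0 0%nat).
  set (spec := fun t v B => length v = n0 /\ forall p' s, agree p0 p' B -> matches s t ->
           forall i, (i < n0)%nat -> prf_eval (bpair p' s) MH i (b2n (nth i v false))).
  set (D := fun t => exists v B, spec t v B).
  assert (HDmono : forall t t', D t -> D (t ++ t')).
  { intros t t' [v [B [Hv Hs]]]. exists v, B. split; auto. intros p' s Ha Hm. apply Hs; auto.
    intros i Hi. rewrite Hm by (rewrite length_app; lia). rewrite app_nth1 by auto. reflexivity. }
  assert (Hu : exists u, forall t, length t = u -> proj1_sig T0 t = true -> D t).
  { apply NNPP. intro Hn.
    destruct (koenig (fun t => proj1_sig T0 t = true /\ ~ D t)) as [x Hx].
    - intros a b [Ha Hb]. split. apply (proj2_sig T0 a b Ha). intro Hd. apply Hb. apply HDmono; auto.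
    - intro k. apply NNPP. intro Hk. apply Hn. exists k. intros t Ht HTt.
      apply NNPP. intro HD. apply Hk. exists t. auto.
    - destruct (apply_red H K Hred p0 Tfull q0 x delta_full full_dom) as [q [s [r [HKq [[_ Hs] [Hr [y [Hy _]]]]]]]].
      { intros nT Hd _. eapply in_paths_ext; [apply delta_Tr_unique with (r := fun i => q0 (S (Nat.double i))); [exact HT0|apply Hd]|].
        intro n. apply Hx. }
      pose proof (HKf _ _ _ HK0 HKq) as <-.
      destruct excluded_middle_informative as [_|Hne]; [|congruence]. subst s.
      pose proof (HMH _ _ Hr) as Hev.
      destruct (fin_bound (fun i B => forall p'', agree (bpair p0 (name x)) p'' B -> prf_eval p'' MH i (r i)) n0) as [B HB].
      { intros i B B' Hle HP p'' Ha. apply HP. eapply agree_mono; eauto. }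
      { intros i _. apply use_prf. apply Hev. }
      apply (proj2 (Hx B)). exists (prefix y n0), B. split; [apply prefix_length|].
      intros p' s Ha Hm i Hi. rewrite prefix_nth by auto.
      replace (b2n (y i)) with (r i) by (rewrite Hy; reflexivity).
      apply HB; auto. apply agree_bpair; auto.
      intros j Hj. rewrite Hm by (rewrite prefix_length; auto). rewrite prefix_nth by auto. reflexivity. }
  destruct Hu as [u Hu].
  assert (Hch : forall t, exists vb : word * nat, D t -> spec t (fst vb) (snd vb)).
  { intro t. destruct (classic (D t)) as [[v [B Hs]]|Hn].
    - exists (v, B). auto.
    - exists ([], 0%nat). tauto. }
  set (cls := fun t => fst (proj1_sig (constructive_indefinite_description _ (Hch t)))).
  set (Bf := fun t => snd (proj1_sig (constructive_indefinite_description _ (Hch t)))).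
  assert (Hcls : forall t, D t -> spec t (cls t) (Bf t)).
  { intros t Ht. unfold cls, Bf. destruct constructive_indefinite_description; simpl; auto. }
  clearbody cls Bf.
  set (cnt := fun i v => length (filter (fun t => proj1_sig T0 t && weq (firstn i (cls t)) v) (words u))).
  assert (Hsplit : forall i, exists v, length v = i /\ (cnt i v * 2 ^ i <= 2 ^ u)%nat).
  { induction i.
    - exists []. split; auto. unfold cnt. simpl.
      rewrite (filter_ext (fun t => proj1_sig T0 t && weq [] []) (proj1_sig T0)) by (intro; rewrite Bool.andb_true_r; reflexivity).
      pose proof (filter_le (proj1_sig T0) (words u)). rewrite words_len in H0. lia.
    - destruct IHi as [v [Hv Hc]].
      assert (Hfs : forall c b, weq (firstn (S i) c) (v ++ [b]) = true -> weq (firstn i c) v = true).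
      { intros c b Hw. apply weq_spec in Hw. apply weq_spec.
        replace (firstn i c) with (firstn i (firstn (S i) c)) by (rewrite firstn_firstn, Nat.min_l by lia; reflexivity). rewrite Hw.
        rewrite firstn_app, Hv, Nat.sub_diag. simpl. rewrite app_nil_r. apply firstn_all2. lia. }
      pose proof (filter_split
        (fun t => proj1_sig T0 t && weq (firstn (S i) (cls t)) (v ++ [false]))
        (fun t => proj1_sig T0 t && weq (firstn (S i) (cls t)) (v ++ [true]))
        (fun t => proj1_sig T0 t && weq (firstn i (cls t)) v) (words u)) as Hfsplit.
      assert (Hle : (length (filter (fun t => proj1_sig T0 t && weq (firstn (S i) (cls t)) (v ++ [false])) (words u)) +
         length (filter (fun t => proj1_sig T0 t && weq (firstn (S i) (cls t)) (v ++ [true])) (words u)) <= cnt i v)%nat).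
      { apply Hfsplit.
        - intros a H1 H2. apply Bool.andb_true_iff in H1, H2. destruct H1 as [_ H1]. destruct H2 as [_ H2].
          apply weq_spec in H1, H2. rewrite H1 in H2. apply app_inv_head in H2. discriminate.
        - intros a H1. apply Bool.andb_true_iff in H1. destruct H1 as [H1 H2]. rewrite H1. simpl. eapply Hfs; eauto.
        - intros a H1. apply Bool.andb_true_iff in H1. destruct H1 as [H1 H2]. rewrite H1. simpl. eapply Hfs; eauto. }
      rewrite Nat.pow_succ_r'.
      destruct (Nat.le_ge_cases
        (length (filter (fun t => proj1_sig T0 t && weq (firstn (S i) (cls t)) (v ++ [false])) (words u)))
        (length (filter (fun t => proj1_sig T0 t && weq (firstn (S i) (cls t)) (v ++ [true])) (words u)))).
      + exists (v ++ [false]). split; [rewrite length_app; simpl; lia|]. unfold cnt at 1. nia.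
      + exists (v ++ [true]). split; [rewrite length_app; simpl; lia|]. unfold cnt at 1. nia. }
  destruct (Hsplit n0) as [vs [Hvs Hcnt]].
  set (BH := listmax (map Bf (words u))).
  set (Z := (2 ^ (u + 2))%nat).
  destruct (fin_bound (fun i B => forall p', agree p0 p' B -> prf_eval p' MK i (q0 i)) Z) as [BK HBK].
  { intros i B B' Hle HP p'' Ha. apply HP. eapply agree_mono; eauto. }
  { intros i _. apply use_prf. apply (HMK _ _ HK0). }
  set (lam := (BH + BK + n0 + 1)%nat).
  assert (Hlam : (n0 < lam)%nat) by lia.
  set (T1 := T1tree lam n0 vs Hlam).
  set (p1 := p1name lam n0 vs).
  assert (Hag1 : agree p0 p1 lam) by apply agree_T1.
  destruct (apply_red H K Hred p1 T1 p0 (fun _ => false) (delta_T1 lam n0 vs Hlam) (T1_dom lam n0 vs Hlam Hvs) base_hyp)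
    as [q1 [s1 [r1 [HK1 [[Hdom1 _] _]]]]].
  destruct Hdom1 as [[n1 T1''] [[Hn1 HT1''] [y1 [Hm1 _]]]]. simpl in Hn1, HT1'', Hm1.
  assert (Hq : forall i, (i < Z)%nat -> q1 i = q0 i).
  { intros i Hi. eapply det_prf. apply (HMK _ _ HK1). apply (HBK i Hi). eapply agree_mono; [|exact Hag1]. lia. }
  assert (Hn10 : n1 = n0).
  { rewrite <- Hn1. unfold n0. apply Hq. unfold Z. pose proof (Nat.pow_nonzero 2 (u+2) ltac:(lia)). lia. }
  rewrite Hn10 in Hm1.
  assert (HT01 : forall w, (length w <= u)%nat -> proj1_sig T1'' w = proj1_sig T0 w).
  { intros w Hw. pose proof (HT1'' w) as E1. pose proof (HT0 w) as E2. simpl in E1, E2.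
    rewrite Hq in E1.
    - rewrite E1 in E2. destruct (proj1_sig T1'' w), (proj1_sig T0 w); simpl in *; congruence.
    - pose proof (wcode_bound w). unfold Z.
      assert (2 ^ (length w + 1) <= 2 ^ (u + 1))%nat by (apply Nat.pow_le_mono_r; lia).
      replace (u + 2)%nat with (S (u + 1)) by lia. rewrite Nat.pow_succ_r'. unfold Nat.double. lia. }
  assert (HT1pre : forall w k, proj1_sig T1'' w = true -> proj1_sig T1'' (firstn k w) = true).
  { intros w k Hw. apply (proj2_sig T1'' _ (skipn k w)). rewrite firstn_skipn. exact Hw. }
  assert (Hbad : forall k, (u <= k)%nat -> exists w, length w = k /\ proj1_sig T1'' w = true /\
                 firstn n0 (cls (firstn u w)) <> vs).
  { intros k Hk. destruct Hm1 as [eps [He Hkk]]. specialize (Hkk k).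
    apply ratio_gt in Hkk; auto. unfold level_count in Hkk.
    apply NNPP. intro Hn.
    assert (Hc : (length (filter (proj1_sig T1'') (words (u + (k - u)))) <=
       length (filter (fun w => (fun t => proj1_sig T0 t && weq (firstn n0 (cls t)) vs) (firstn u w)) (words (u + (k - u)))))%nat).
    { apply filter_mono_in. intros a Ha HTa. apply words_length in Ha.
      rewrite <- HT01 by (rewrite length_firstn; lia). rewrite HT1pre by auto. simpl.
      destruct (weq (firstn n0 (cls (firstn u a))) vs) eqn:E; auto.
      exfalso. apply Hn. exists a. split; [lia|]. split; auto. intro He'. apply weq_spec in He'. congruence. }
    rewrite count_lemma in Hc. fold (cnt n0 vs) in Hc.
    replace (u + (k - u))%nat with k in Hc by lia.
    assert (Hp : (2 ^ k = 2 ^ u * 2 ^ (k - u))%nat) by (rewrite <- Nat.pow_add_r; f_equal; lia).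
    set (L := length (filter (proj1_sig T1'') (words k))) in *.
    set (c := cnt n0 vs) in *.
    assert (A1 : (L * 2 ^ n0 <= c * 2 ^ (k - u) * 2 ^ n0)%nat) by (apply Nat.mul_le_mono_r; auto).
    assert (A2 : (c * 2 ^ n0 * 2 ^ (k - u) <= 2 ^ u * 2 ^ (k - u))%nat) by (apply Nat.mul_le_mono_r; auto).
    lia. }
  destruct (koenig (fun w => proj1_sig T1'' w = true /\ ((length w <= u)%nat \/ firstn n0 (cls (firstn u w)) <> vs))) as [x Hx].
  { intros a b [Ha Hb]. split. apply (proj2_sig T1'' a b Ha).
    destruct (Nat.le_gt_cases (length a) u) as [Hl|Hl]; [left; auto|right].
    destruct Hb as [Hb|Hb]; [rewrite length_app in Hb; lia|].
    rewrite firstn_app in Hb. replace (u - length a)%nat with 0%nat in Hb by lia.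
    simpl in Hb. rewrite app_nil_r in Hb. exact Hb. }
  { intro k. destruct (Hbad (k + u)%nat ltac:(lia)) as [w [Hl [Hw Hb]]].
    exists (firstn k w). split; [rewrite length_firstn; lia|]. split; auto.
    destruct (Nat.le_gt_cases k u) as [Hk|Hk]; [left; rewrite length_firstn; lia|right].
    rewrite firstn_firstn, Nat.min_l by lia. exact Hb. }
  assert (Hxp : in_paths T1'' x) by (intro n; apply Hx).
  assert (Hxb : firstn n0 (cls (prefix x u)) <> vs).
  { destruct (Hx (S u)) as [_ [Hl|Hb]]; [rewrite prefix_length in Hl; lia|].
    rewrite firstn_prefix in Hb by lia. exact Hb. }
  set (t := prefix x u).
  assert (HDt : D t).
  { unfold t. apply Hu. apply prefix_length. rewrite <- HT01 by (rewrite prefix_length; lia). apply Hxp. }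
  destruct (Hcls t HDt) as [Hlc Hsp].
  destruct (apply_red H K Hred p1 T1 q1 x (delta_T1 lam n0 vs Hlam) (T1_dom lam n0 vs Hlam Hvs))
    as [q [s [r [HKq [[_ Hs] [Hr [y [Hy Hwy]]]]]]]].
  { intros nT Hd _. eapply in_paths_ext; [|exact Hxp].
    apply delta_Tr_unique with (r := fun i => q1 (S (Nat.double i))); [exact HT1''|apply Hd]. }
  pose proof (HKf _ _ _ HK1 HKq) as <-.
  destruct excluded_middle_informative as [_|Hne]; [|congruence]. subst s.
  assert (Hyc : prefix y n0 = cls t).
  { apply nth_ext with (d := false) (d' := false).
    - rewrite prefix_length; auto.
    - intros i Hi. rewrite prefix_length in Hi. rewrite prefix_nth by auto.
      apply b2n_inj. change (b2n (y i)) with (if y i then 1%nat else 0%nat). rewrite <- (Hy i).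
      eapply det_prf. apply (HMH _ _ Hr).
      apply Hsp; auto.
      + eapply agree_mono; [|exact Hag1].
        assert (In (Bf t) (map Bf (words u))) by (apply in_map, words_In, prefix_length).
        apply listmax_In in H0. unfold BH in lam. lia.
      + intros j Hj. unfold t in *. rewrite prefix_length in Hj. rewrite prefix_nth by auto. reflexivity. }
  assert (Hyv : prefix y n0 = vs).
  { destruct Hwy as [_ Hyp]. specialize (Hyp lam). simpl in Hyp. unfold T1fun in Hyp.
    apply Bool.orb_true_iff in Hyp. destruct Hyp as [Hyp|Hyp].
    - apply Nat.ltb_lt in Hyp. rewrite prefix_length in Hyp. lia.
    - apply weq_spec in Hyp. rewrite firstn_prefix in Hyp by lia. exact Hyp. }
  apply Hxb. fold t. rewrite firstn_all2 by lia. congruence.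
Qed.

Theorem corollary10p9 :
  sW_le starWWKL WWKL /\ W_lt starWWKL WWKL.
Proof.
  split; [apply sW_part|]. split; [apply W_part|apply neg_part].
Qed.
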